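(* Let $g\colon\Sigma_0\to\Sigma_1$ be a strict morphism of connected labeled graphs that induces a surjection on fundamental groups. Suppose that for some $b\in\mathcal B$ the number of edges of $\Sigma_1$ labeled $b^{\pm1}$ is less than the number of edges of $\Sigma_0$ labeled $b^{\pm1}$. Then there are an immersed edge path $\sigma\colon I\to\Sigma_0$, given by $e_0e_1\cdots e_m$, a labeled tree $T$, and strict morphisms $g'\colon I\to T$ and $T\to\Sigma_1$ such that $g\circ\sigma$ equals the composite $I\to T\to\Sigma_1$, $e_0$ and $e_m^{-1}$ carry the same label $b'\in\{b,b^{-1}\}$, no $e_i$ with $0<i<m$ is labeled $b^{\pm1}$, and $g'$ maps the first edge and the inverse of the last edge of $I$ to the same edge of $T$.
   Context: Labeled graphs have oriented edges labeled in $\mathcal B^{\pm1}$ ($\mathcal B$ a finite set), with $e^{-1}$ carrying the inverse label. A map of labeled graphs is a morphism if it preserves labels and orientations and its lift to universal covers is a simplicial map of trees; it is strict if no edge is mapped to a point. An edge path is a strict morphism from an oriented subdivided compact interval $I$, identified with its sequence of oriented edges $e_0\cdots e_m$; it is immersed if no $e_i=e_{i-1}^{-1}$. *)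

(* Defs.v *)
From Stdlib Require Import Relations.Relation_Operators.
From mathcomp Require Import all_boot.

Set Implicit Arguments.
Unset Strict Implicit.
Unset Printing Implicit Defensive.

(* A (finite) labeled graph: vertices, oriented edges with a fixed-point-free
   involution e |-> e^{-1}, origin map, and labels in B^{+-1}, encoded as
   B * bool (true = b, false = b^{-1}); e^{-1} carries the inverse label. *)
Record lgraph (B : finType) := LGraph {
  vert : finType;
  edge : finType;
  src : edge -> vert;
  einv : edge -> edge;
  lab : edge -> B * bool;
  einvK : involutive einv;
  einv_neq : forall e, einv e != e;
  lab_einv : forall e, lab (einv e) = ((lab e).1, ~~ (lab e).2)
}.

Definition tgt (B : finType) (G : lgraph B) (e : edge G) : vert G := src (einv e).

Record smorph (B : finType) (G H : lgraph B) := SMorph {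
  mv : vert G -> vert H;
  me : edge G -> edge H;
  me_einv : forall e, me (einv e) = einv (me e);
  me_src : forall e, src (me e) = mv (src e);
  me_lab : forall e, lab (me e) = lab e
}.

Fixpoint is_path (B : finType) (G : lgraph B) (v : vert G) (p : seq (edge G))
    (w : vert G) : bool :=
  match p with
  | [::] => v == w
  | e :: p' => (src e == v) && is_path (tgt e) p' w
  end.

Definition immersed (B : finType) (G : lgraph B) (p : seq (edge G)) : bool :=
  sorted (fun e f => f != einv e) p.

Definition pend (B : finType) (G : lgraph B) (v : vert G) (p : seq (edge G)) :=
  last v (map (@tgt B G) p).

Inductive bt_step (B : finType) (G : lgraph B) (v : vert G) :
    seq (edge G) -> seq (edge G) -> Prop :=
  BtStep (a c : seq (edge G)) (e : edge G) of src e = pend v a :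
    bt_step v (a ++ c) (a ++ e :: einv e :: c).

Definition homotopic (B : finType) (G : lgraph B) (v : vert G) :=
  clos_refl_sym_trans _ (bt_step v).

Definition connected (B : finType) (G : lgraph B) : Prop :=
  forall u w : vert G, exists p, is_path u p w.

Definition pi1_surj (B : finType) (G H : lgraph B) (g : smorph G H) (v0 : vert G) :=
  forall p, is_path (mv g v0) p (mv g v0) ->
    exists q, is_path v0 q v0 /\ homotopic (mv g v0) (map (me g) q) p.

Definition is_tree (B : finType) (T : lgraph B) : Prop :=
  connected T /\ forall (v : vert T) (p : seq (edge T)), is_path v p v -> immersed p -> p = [::].

(* number of oriented edges labeled b (= number of geometric edges labeled b^{+-1}) *)
Definition nb_edges (B : finType) (G : lgraph B) (b : B) : nat :=
  #|[pred e : edge G | lab e == (b, true)]|.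

(* Main.v *)
Require Import Defs.
From mathcomp Require Import all_boot.
From mathcomp Require Import zify.
From Stdlib Require Import Relations.Relation_Operators.

Set Implicit Arguments.
Unset Strict Implicit.
Unset Printing Implicit Defensive.



Section Red.
Variables (B : finType) (G : lgraph B).
Notation E := (edge G).

Lemma einvKK (x : E) : einv (einv x) = x.
Proof. exact: einvK. Qed.

Lemma einv_inj : injective (@einv B G).
Proof. exact: (can_inj (@einvK B G)). Qed.

Lemma eq_einv_sym (x y : E) : (x == einv y) = (y == einv x).
Proof.
apply/eqP/eqP => ->; by rewrite einvKK.
Qed.

Definition rstep (s : seq E) (c : E) : seq E :=
  if s is d :: s' then (if d == einv c then s' else c :: s) else [:: c].
Definition rho (s w : seq E) := foldl rstep s w.
Definition sred (s : seq E) := sorted (fun x y => x != einv y) s.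
Definition red (w : seq E) := rev (rho [::] w).
Definition pinv (p : seq E) := rev (map (@einv B G) p).

Lemma sred_rstep s c : sred s -> sred (rstep s c).
Proof.
case: s => [|d s'] //= H.
case: ifP => Hd; first exact: path_sorted H.
by rewrite /= H andbT eq_einv_sym Hd.
Qed.

Lemma sred_rho s w : sred s -> sred (rho s w).
Proof. by elim: w s => [|c w IH] s //= Hs; apply: IH; apply: sred_rstep. Qed.

Lemma sred_nil : sred [::]. Proof. by []. Qed.

Lemma rstepK s c : sred s -> rstep (rstep s c) (einv c) = s.
Proof.
case: s => [|d s'] /=; first by rewrite /rstep einvKK eqxx.
case: ifP => Hd H.
  move/eqP: Hd => Hd; subst d.
  case: s' H => [|d' s''] //= /andP [H1 _].
  rewrite einvKK.
  have -> : (d' == c) = false.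
    apply/negbTE; apply: contra H1 => /eqP ->; by rewrite eqxx.
  by [].
by rewrite /= einvKK eqxx.
Qed.

Lemma rho_cat s u v : rho s (u ++ v) = rho (rho s u) v.
Proof. exact: foldl_cat. Qed.

Lemma rho_rcons s w c : rho s (rcons w c) = rstep (rho s w) c.
Proof. exact: foldl_rcons. Qed.

Lemma rhoK s w : sred s -> rho s w = rho s (rev (rho [::] w)).
Proof.
move=> Hs; elim/last_ind: w => [|w c IH] //.
rewrite !rho_rcons IH.
case E1: (rho [::] w) => [|d R'].
  by [].
have [Hd|Hd] := eqVneq d (einv c).
  have -> : rstep (d :: R') c = R' by rewrite /= Hd eqxx.
  rewrite rev_cons rho_rcons Hd.
  have := rstepK (einv c) (sred_rho (rev R') Hs).
  by rewrite einvKK.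
have -> : rstep (d :: R') c = c :: d :: R' by rewrite /= (negbTE Hd).
by rewrite [in RHS]rev_cons !rho_rcons.
Qed.

Lemma red_catE u v : red (u ++ v) = rev (rho (rev (red u)) (red v)).
Proof.
rewrite /red rho_cat !revK; congr rev.
by apply: rhoK; apply: sred_rho.
Qed.

Lemma red_cat_congr u u' v v' :
  red u = red u' -> red v = red v' -> red (u ++ v) = red (u' ++ v').
Proof. by move=> H1 H2; rewrite !red_catE H1 H2. Qed.

Lemma rho_inv s w : sred s -> rho s (w ++ pinv w) = s.
Proof.
elim: w s => [|c w IH] s Hs //=.
rewrite /pinv /= rev_cons -cats1 -/(pinv w) catA rho_cat /=.
by rewrite IH ?rstepK //; apply: sred_rstep.
Qed.

Lemma pinv_cat u v : pinv (u ++ v) = pinv v ++ pinv u.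
Proof. by rewrite /pinv map_cat rev_cat. Qed.

Lemma pinvK w : pinv (pinv w) = w.
Proof. by rewrite /pinv map_rev revK -map_comp map_id_in // => x _ /=; rewrite einvKK. Qed.

Lemma red_inv w : red (w ++ pinv w) = [::].
Proof. by rewrite /red rho_inv. Qed.

Lemma red_inv' w : red (pinv w ++ w) = [::].
Proof. by rewrite -{2}(pinvK w) red_inv. Qed.

Lemma red_nil : red [::] = [::]. Proof. by []. Qed.

Lemma rho_path x s0 w :
  path (fun e f => f != einv e) x w -> rho (x :: s0) w = rev w ++ x :: s0.
Proof.
elim: w x s0 => [|c w IH] x s0 //= /andP [H1 H2].
have -> : (x == einv c) = false by apply/negbTE; rewrite eq_einv_sym.
by rewrite IH // rev_cons cat_rcons.
Qed.

Lemma red_immersed w : sorted (fun e f => f != einv e) w -> red w = w.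
Proof.
case: w => [|c w] //= H.
by rewrite /red /= rho_path // rev_cat revK.
Qed.

Lemma red_cancel a x c : red (a ++ x :: einv x :: c) = red (a ++ c).
Proof.
rewrite !red_catE; congr (rev (rho _ _)).
by rewrite /red /= einvKK eqxx.
Qed.

Lemma red_bt (v : vert G) (p q : seq E) : bt_step v p q -> red p = red q.
Proof. by case=> a c e _; rewrite red_cancel. Qed.

Lemma red_homotopic (v : vert G) (p q : seq E) : homotopic v p q -> red p = red q.
Proof.
elim=> [x y /red_bt | x | x y _ -> | x y z _ -> _ ->] //.
Qed.

Lemma is_path_cat (u w : vert G) (p q : seq E) :
  is_path u (p ++ q) w = is_path u p (pend u p) && is_path (pend u p) q w.
Proof.
elim: p u => [|e p IH] u /=; first by rewrite eqxx.
by rewrite IH andbA.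
Qed.

Lemma is_path_end (u w : vert G) (p : seq E) : is_path u p w -> w = pend u p.
Proof.
by elim: p u => [|e p IH] u /=; [move/eqP => -> | case/andP => _ /IH].
Qed.

Lemma is_path_catI (u v w : vert G) (p q : seq E) : is_path u p v -> is_path v q w -> is_path u (p ++ q) w.
Proof.
move=> H1 H2; rewrite is_path_cat -(is_path_end H1) H1 /=.
exact: H2.
Qed.

Lemma is_path_catE (u w : vert G) (p q : seq E) : is_path u (p ++ q) w ->
  is_path u p (pend u p) /\ is_path (pend u p) q w.
Proof. by rewrite is_path_cat => /andP. Qed.

Lemma is_path_inv (u w : vert G) (p : seq E) : is_path u p w -> is_path w (pinv p) u.
Proof.
elim: p u => [|e p IH] u /=; first by move/eqP => ->.
case/andP => /eqP He /IH Hp.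
rewrite /pinv /= rev_cons -cats1 -/(pinv p).
apply: (is_path_catI Hp) => /=.
by rewrite /tgt einvKK He !eqxx.
Qed.

Lemma is_path_rho (u x v : vert G) (s w : seq E) :
  is_path u (rev s) x -> is_path x w v -> is_path u (rev (rho s w)) v.
Proof.
elim: w s x => [|c w IH] s x /=; first by move=> H /eqP <-.
move=> Hs /andP [/eqP Hc Hw]; apply: (IH _ (tgt c)) => //.
case: s Hs => [|d s'] /=.
  by move/eqP => ->; rewrite /= Hc !eqxx.
case: ifP => Hd.
  rewrite rev_cons -cats1 => /is_path_catE [H1 H2].
  move: H2 => /= /andP [/eqP H2 _].
  move/eqP: Hd H2 => -> H2.
  by rewrite /tgt H2.
move=> H; rewrite rev_cons -cats1.
by apply: (is_path_catI H); rewrite /= Hc !eqxx.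
Qed.

Lemma is_path_red (u v : vert G) (w : seq E) : is_path u w v -> is_path u (rev (rho [::] w)) v.
Proof. by move=> H; apply: (is_path_rho (x:=u)) H; rewrite /= eqxx. Qed.

Lemma immersed_red w : immersed (rev (rho [::] w)).
Proof.
rewrite /immersed rev_sorted.
by have := sred_rho w sred_nil.
Qed.

Lemma sorted_catR (r : rel E) a b : sorted r (a ++ b) -> sorted r b.
Proof. by elim: a => [|x a IH] //= /path_sorted. Qed.

Lemma sorted_catL (r : rel E) a b : sorted r (a ++ b) -> sorted r a.
Proof. by case: a => [|x a] //=; rewrite cat_path => /andP []. Qed.

Lemma sorted_mid (r : rel E) a x y b : sorted r (a ++ x :: y :: b) -> r x y.
Proof. by move/sorted_catR => /= /andP []. Qed.

End Red.

Section Red2.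
Variables (B : finType) (G : lgraph B).
Notation E := (edge G).

Lemma red_pair (x : E) : red [:: einv x; x] = [::].
Proof. by rewrite /red /= eqxx. Qed.

Lemma red_conj (x : E) M : red (x :: M ++ [:: einv x]) = [::] -> red M = [::].
Proof.
move=> H.
have Hx : red ([:: einv x] ++ [:: x]) = [::] := red_inv' [:: x].
have E1 : red M = red (([:: einv x] ++ [:: x]) ++ (M ++ ([:: einv x] ++ [:: x]))).
  rewrite -[M in LHS]cats0 -[M ++ [::]]cat0s.
  apply: red_cat_congr; first by rewrite Hx.
  by apply: red_cat_congr => //; rewrite Hx.
rewrite E1.
have -> : ([:: einv x] ++ [:: x]) ++ (M ++ ([:: einv x] ++ [:: x])) =
  [:: einv x] ++ ((x :: M ++ [:: einv x]) ++ [:: x]) by rewrite /= -catA.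
rewrite (@red_cat_congr _ _ [:: einv x] [:: einv x] ((x :: M ++ [:: einv x]) ++ [:: x]) ([::] ++ [:: x])) //; last exact: red_cat_congr.
Qed.

Lemma red_headinv (x : E) M : red (x :: M) = [::] -> red M = [:: einv x].
Proof.
move=> H.
have E1 : red M = red ([:: einv x; x] ++ M).
  by rewrite -{1}[M]cat0s; apply: red_cat_congr => //; rewrite red_pair.
rewrite E1; change (red ([:: einv x] ++ (x :: M)) = [:: einv x]).
by rewrite (@red_cat_congr _ _ [:: einv x] [:: einv x] (x :: M) [::]).
Qed.

Lemma red_tailinv (x : E) M : red (M ++ [:: einv x]) = [::] -> red M = [:: x].
Proof.
move=> H.
have E1 : red M = red (M ++ [:: einv x; x]).
  by rewrite -{1}[M]cats0; apply: red_cat_congr => //; rewrite red_pair.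
rewrite E1.
have -> : M ++ [:: einv x; x] = (M ++ [:: einv x]) ++ [:: x] by rewrite -catA.
by rewrite (@red_cat_congr _ _ _ [::] [:: x] [:: x]).
Qed.

End Red2.



Lemma cat_split (T : Type) (a c r1 r2 : seq T) z : a ++ c = r1 ++ z :: r2 ->
  (exists a2, a = r1 ++ z :: a2 /\ r2 = a2 ++ c) \/
  (exists c1, c = c1 ++ z :: r2 /\ r1 = a ++ c1).
Proof.
elim: a r1 => [|x a IH] r1 /=; first by move=> ->; right; exists r1.
case: r1 => [|y r1] /= [-> H].
  by left; exists a.
case: (IH _ H) => [[a2 [-> ->]]|[c1 [-> ->]]]; first by left; exists a2.
by right; exists c1.
Qed.

Lemma nsorted_split (T : Type) (r : rel T) w : ~~ sorted r w ->
  exists a x y c, w = a ++ x :: y :: c /\ ~~ r x y.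
Proof.
elim: w => [|x w IH] //.
case: w IH => [_ /= //|y w IH].
rewrite /= => H.
case Hxy: (r x y); last by exists [::], x, y, w; rewrite Hxy.
rewrite Hxy /= in H.
case: IH => // a [x' [y' [c [Hw Hr]]]].
by exists (x :: a), x', y', c; rewrite Hw.
Qed.

Section Words.
Variables (B : finType) (G : lgraph B) (X : Type) (phi : X -> edge G).

Lemma red_map_cancel a x y c : phi y = einv (phi x) ->
  red (map phi (a ++ x :: y :: c)) = red (map phi (a ++ c)).
Proof. by move=> H; rewrite !map_cat /= H red_cancel. Qed.

Lemma nred_split w : ~~ sorted (fun e f => f != einv e) (map phi w) ->
  exists a x y c, w = a ++ x :: y :: c /\ phi y = einv (phi x).
Proof.
rewrite sorted_map => /nsorted_split [a [x [y [c [-> H]]]]].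
by exists a, x, y, c; split => //; move: H => /= /negPn /eqP.
Qed.

Lemma red_single w d : red (map phi w) = [:: d] ->
  exists w1 z w2, w = w1 ++ z :: w2 /\ phi z = d /\ red (map phi w1) = [::].
Proof.
move: {2}(size w) (leqnn (size w)) => n; elim: n w => [|n IH] w Hn Hr.
  by case: w Hn Hr.
case Hs: (sorted (fun e f => f != einv e) (map phi w)).
  rewrite red_immersed // in Hr.
  case: w Hr {Hn Hs} => [|z [|z' w]] //= [Hz].
  by exists [::], z, [::].
case: (nred_split (negbT Hs)) => a [x [y [c [Hw Hxy]]]].
subst w; rewrite red_map_cancel // in Hr.
have Hn' : size (a ++ c) <= n.
  by move: Hn; rewrite !size_cat /= !addnS ltnS => /ltnW.
case: (IH _ Hn' Hr) => w1 [z [w2 [Hac [Hz Hw1]]]].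
case: (cat_split Hac) => [[a2 [Ha Hw2]]|[c1 [Hc Hw1']]]; subst.
  by exists w1, z, (a2 ++ x :: y :: c); rewrite -catA.
exists (a ++ x :: y :: c1), z, w2; split; first by rewrite -catA.
by rewrite red_map_cancel.
Qed.

Lemma red_cross w p y r : red (map phi w) = [::] -> w = p ++ y :: r ->
  (exists p1 z p2, p = p1 ++ z :: p2 /\ phi z = einv (phi y) /\ red (map phi p2) = [::]) \/
  (exists r1 z r2, r = r1 ++ z :: r2 /\ phi z = einv (phi y) /\ red (map phi r1) = [::]).
Proof.
move: {2}(size w) (leqnn (size w)) => n; elim: n w p y r => [|n IH] w p y r Hn Hr Hw.
  by move: Hn; rewrite Hw size_cat addnS.
case Hs: (sorted (fun e f => f != einv e) (map phi w)).
  by rewrite red_immersed // Hw map_cat in Hr; case: (map phi p) Hr.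
case: (nred_split (negbT Hs)) => a [x [x' [c [Hw' Hxx]]]].
have Hn' : size (a ++ c) <= n.
  by move: Hn; rewrite Hw' !size_cat /= !addnS ltnS => /ltnW.
have Hr' : red (map phi (a ++ c)) = [::] by rewrite -(red_map_cancel a c Hxx) -Hw'.
rewrite Hw' in Hw; case: (cat_split Hw) => [[a2 [Ha Hr2]]|[c1 [Hc Hp]]].
- subst a r.
  case: (IH _ _ _ _ Hn' Hr' (esym (catA p (y :: a2) c))) => [L|[r1 [z [r2 [Hac [Hz H1]]]]]].
    by left.
  right; case: (cat_split Hac) => [[a3 [Ha3 Hb3]]|[c2 [Hc2 Hd2]]]; subst.
    by exists r1, z, (a3 ++ x :: x' :: c); rewrite -catA.
  exists (a2 ++ x :: x' :: c2), z, r2; split; first by rewrite -catA.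
  by split => //; rewrite red_map_cancel.
- case: c1 Hc Hp => [|x1 [|x2 c1]] /= Hc Hp.
  + case: Hc => ? ?; subst; right; exists [::]; do 2 eexists; split; first by [].
    by split.
  + case: Hc => ? ? ?; subst; left; exists a; do 2 eexists; split; first by [].
    split => //.
    by rewrite Hxx einvKK.
  + case: Hc => Hx1 Hx2 Hc; rewrite -Hx1 -Hx2 in Hp; clear Hx1 Hx2; subst c p.
    case: (IH _ (a ++ c1) y r Hn' Hr'); first by rewrite catA.
      move=> [p1 [z [p2 [Hac [Hz H1]]]]]; left.
      case: (cat_split Hac) => [[a3 [Ha3 Hb3]]|[c2 [Hc2 Hd2]]]; subst.
        exists p1, z, (a3 ++ x :: x' :: c1); split; first by rewrite -catA.
        by split => //; rewrite red_map_cancel.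
      by exists (a ++ x :: x' :: c2), z, p2; rewrite -catA.
    by move=> R; right.
Qed.

End Words.

Module TreeM.


Section Tree.
Variables (B : finType) (S1 : lgraph B) (x0 w0 : vert S1) (c : seq (edge S1)) (d0 : edge S1).
Hypothesis Hpath : is_path x0 c w0.
Hypothesis Hred : rho [::] c = [::].
Hypothesis Hc0 : 0 < size c.
Hypothesis Hend : nth d0 c (size c).-1 = einv (nth d0 c 0).

Definition P t := rho [::] (take t c).
Definition L := [seq P t | t <- iota 0 (size c).+1].
Definition V : finType := seq_sub L.
Definition endp (s : seq (edge S1)) := if s is d :: _ then tgt d else x0.
Definition Ep (p : V * edge S1) : bool :=
  (rstep (ssval p.1) p.2 \in L) && (src p.2 == endp (ssval p.1)).
Definition ET : finType := {p : V * edge S1 | Ep p}.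

Lemma memL s : s \in L -> sred s.
Proof. by case/mapP => t _ ->; apply: sred_rho. Qed.

Lemma endp_pend s : endp s = pend x0 (rev s).
Proof. by case: s => [|d s'] //=; rewrite rev_cons /pend map_rcons last_rcons. Qed.

Lemma path_take t : is_path x0 (take t c) (pend x0 (take t c)).
Proof.
by move: Hpath; rewrite -{1}(cat_take_drop t c) => /is_path_catE [].
Qed.

Lemma endp_P t : endp (P t) = pend x0 (take t c).
Proof.
rewrite endp_pend; apply/esym/is_path_end.
exact: is_path_red (path_take t).
Qed.

Lemma memL_path s : s \in L -> is_path x0 (rev s) (endp s).
Proof.
case/mapP => t _ ->; rewrite endp_P.
exact: is_path_red (path_take t).
Qed.

Lemma src_nth t : t < size c -> src (nth d0 c t) = pend x0 (take t c).
Proof.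
move=> Ht; move: Hpath; rewrite -{1}(cat_take_drop t c) (drop_nth d0 Ht).
by case/is_path_catE => _ /= /andP [/eqP].
Qed.

Lemma Ep_einv (e : ET) : Ep (SeqSub (andP (valP e)).1, einv (val e).2).
Proof.
case: e => [[v c'] H] /=; rewrite /Ep /=.
have sv := memL (ssvalP v).
rewrite rstepK // ssvalP /=.
case/andP: H => Hm /eqP Hs.
have := memL_path (ssvalP v).
move: Hm; case: (ssval v) Hs => [|d s'] Hs /=; first by rewrite eqxx.
case: ifP => Hd Hm; last by rewrite eqxx.
move/eqP: Hd => Hd; subst d.
rewrite rev_cons -cats1 => /is_path_catE [H1 /= /andP [/eqP H2 _]].
by rewrite endp_pend -H2 eqxx.
Qed.

Definition einvT_v (e : ET) : V := SeqSub (andP (valP e)).1.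
Definition einvT (e : ET) : ET := exist _ (einvT_v e, einv (val e).2) (Ep_einv e).

Lemma einvTK : involutive einvT.
Proof.
move=> [[v c'] H]; apply: val_inj; rewrite /= einvKK; congr pair.
apply: val_inj => /=; apply: rstepK; exact: memL (ssvalP v).
Qed.

Lemma einvT_neq e : einvT e != e.
Proof.
apply/eqP => H; have := congr1 (fun e : ET => (val e).2) H => /=.
by apply/eqP; apply: einv_neq.
Qed.

Definition labT (e : ET) := lab (val e).2.

Lemma labT_einv e : labT (einvT e) = ((labT e).1, ~~ (labT e).2).
Proof. exact: lab_einv. Qed.

Definition T : lgraph B := @LGraph B V ET (fun e => (val e).1) einvT labT einvTK einvT_neq labT_einv.

Lemma h_src (e : edge T) : src ((val e).2) = endp (ssval (val e).1).
Proof. by case/andP: (valP e) => _ /eqP. Qed.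

Definition h : smorph T S1 :=
  @SMorph B T S1 (fun v : V => endp (ssval v)) (fun e : ET => (val e).2)
    (fun e => erefl) h_src (fun e => erefl).

Definition upE (e : ET) := rstep (ssval (val e).1) (val e).2 == (val e).2 :: ssval (val e).1.

Lemma rstep_down s (c' : edge S1) : rstep s c' != c' :: s -> exists s', s = einv c' :: s'.
Proof.
case: s => [|d s'] /=; first by rewrite eqxx.
by case: ifP => [/eqP -> _|_]; [exists s' | rewrite eqxx].
Qed.

Lemma down_uniq (e e' : ET) : ~~ upE e -> ~~ upE e' -> (val e).1 = (val e').1 -> e = e'.
Proof.
move: e e' => [[v c1] H] [[v' c2] H'] /= /rstep_down [s1 E1] /rstep_down [s2 E2] Ev.
subst v'; rewrite E1 in E2; case: E2 => /einv_inj Ec _; subst c2.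
by apply: val_inj.
Qed.

Lemma neq_size (s t : seq (edge S1)) : size s != size t -> (s == t) = false.
Proof. by apply: contraNF => /eqP ->. Qed.

Lemma upE_einv e : upE (einvT e) = ~~ upE e.
Proof.
move: e => [[v c'] H]; rewrite /upE /= rstepK; last exact: memL (ssvalP v).
case: (ssval v) => [|d s'] /=; first by rewrite eqxx.
case: ifP => [/eqP ->|Hd].
  rewrite eqxx neq_size //= ; lia.
rewrite eqxx neq_size //=; lia.
Qed.

Lemma size_up (e : ET) : upE e ->
  size (ssval (einvT_v e)) = (size (ssval (val e).1)).+1.
Proof. by rewrite /upE /einvT_v /= => /eqP ->. Qed.

Lemma size_down (e : ET) : ~~ upE e ->
  (size (ssval (einvT_v e))).+1 = size (ssval (val e).1).
Proof.
move: e => [[v c'] H]; rewrite /upE /einvT_v /= => /rstep_down [s' E1].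
by rewrite E1 /= eqxx.
Qed.

Lemma immersed_split (u w : V) (p : seq ET) : @is_path B T u p w -> immersed (G:=T) p ->
  exists pd pu, p = pd ++ pu /\ all (predC upE) pd /\ all upE pu.
Proof.
elim: p u => [|e p IH] u /=; first by exists [::], [::].
case/andP => _ Hp Him.
case: (IH _ Hp (path_sorted Him)) => pd [pu [Ep' [Hd Hu]]]; clear IH; subst p.
case Hue: (upE e); last by exists (e :: pd), pu; rewrite /= Hue.
case: pd Hd Him Hp => [|e' pd] Hd Him Hp; first by exists [::], (e :: pu); rewrite /= Hue.
exfalso; move: Hd => /= /andP [He' _].
have Hs : (val e').1 = (val (einvT e)).1 by move: Hp => /= /andP [/eqP].
have Hd2 : ~~ upE (einvT e) by rewrite upE_einv Hue.
have := down_uniq He' Hd2 Hs => Hee.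
by move: Him; rewrite /= Hee eqxx.
Qed.

Lemma path_down (u w : V) (p : seq ET) : @is_path B T u p w -> all (predC upE) p ->
  size (ssval w) + size p = size (ssval u).
Proof.
elim: p u => [|e p IH] u /=; first by move/eqP => ->; rewrite addn0.
case/andP => /eqP He Hp /andP [Hd Ha].
by rewrite addnS (IH _ Hp Ha) /tgt /= size_down // He.
Qed.

Lemma path_up (u w : V) (p : seq ET) : @is_path B T u p w -> all upE p ->
  size (ssval w) = size (ssval u) + size p.
Proof.
elim: p u => [|e p IH] u /=; first by move/eqP => ->; rewrite addn0.
case/andP => /eqP He Hp /andP [Hd Ha].
by rewrite addnS (IH _ Hp Ha) /tgt /= size_up // He addSn.
Qed.

Lemma down_path_uniq (u w w' : V) (p p' : seq ET) :
  @is_path B T u p w -> @is_path B T u p' w' ->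
  all (predC upE) p -> all (predC upE) p' -> size p = size p' -> p = p'.
Proof.
elim: p p' u => [|e p IH] [|e' p'] u //= /andP [/eqP He Hp] /andP [/eqP He' Hp']
  /andP [Hd Ha] /andP [Hd' Ha'] [Hsz].
have Hee : e = e' by apply: down_uniq => //; rewrite He He'.
subst e'; congr cons; exact: IH Hp Hp' Ha Ha' Hsz.
Qed.

Lemma tree_noloop (v : V) (p : seq ET) : @is_path B T v p v -> immersed (G:=T) p -> p = [::].
Proof.
move=> Hp Him; case: (immersed_split Hp Him) => pd [pu [Ep' [Hd Hu]]]; subst p.
case/is_path_catE: Hp => H1 H2.
have S1' := path_down H1 Hd; have S2 := path_up H2 Hu.
have Hsz : size pd = size pu.
  by apply/eqP; rewrite -(eqn_add2l (size (ssval (pend (G:=T) v pd)))) S1' -S2.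
have Hi := is_path_inv (G:=T) H2.
have Hid : all (predC upE) (pinv (G:=T) pu).
  rewrite /pinv all_rev all_map; apply/allP => x Hx /=.
  by rewrite upE_einv negbK (allP Hu).
have Hsz' : size (pinv (G:=T) pu) = size pd by rewrite /pinv size_rev size_map Hsz.
have Heq := down_path_uniq Hi H1 Hid Hd Hsz'.
clear H1 H2 Hi Hd Hsz' S1' S2 Hid.
case/lastP: pd Heq Hsz Him => [|pd' e] Heq Hsz Him.
  by case: pu Hsz {Heq Hu Him}.
have Hpu : pu = einvT e :: pinv (G:=T) pd'.
  by rewrite -(pinvK (G:=T) pu) Heq /pinv map_rcons rev_rcons.
move: Him; rewrite Hpu -cats1 -catA /= => /sorted_mid.
by rewrite eqxx.
Qed.

Definition fT t : option ET :=
  obind (fun v : V => insub (v, nth d0 c t)) (insub (P t)).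

Definition rawe (e : ET) := (ssval (val e).1, (val e).2).

Lemma rawe_inj : injective rawe.
Proof.
move=> [[v c1] H] [[v' c2] H'] [E1 E2]; subst c2.
have Ev : v = v' by apply: val_inj.
by subst v'; apply: val_inj.
Qed.

Lemma P_mem t : t <= size c -> P t \in L.
Proof. by move=> Ht; apply/mapP; exists t => //; rewrite mem_iota add0n ltnS. Qed.

Lemma P_succ t : t < size c -> rstep (P t) (nth d0 c t) = P t.+1.
Proof. by move=> Ht; rewrite /P (take_nth d0 Ht) rho_rcons. Qed.

Lemma fT_spec t : t < size c -> exists e, fT t = Some e /\ rawe e = (P t, nth d0 c t).
Proof.
move=> Ht; rewrite /fT.
case: insubP => [v Hv Hvv|]; last by rewrite P_mem // ltnW.
rewrite /=.
case: insubP => [e He Hee|]; first by exists e; split => //; rewrite /rawe Hee /= Hvv.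
rewrite /Ep /= Hvv P_succ // P_mem //= src_nth // endp_P eqxx.
by [].
Qed.

Definition f := pmap fT (iota 0 (size c)).

Lemma map_rawe_pmap s : all (fun t => t < size c) s ->
  map rawe (pmap fT s) = [seq (P t, nth d0 c t) | t <- s].
Proof.
elim: s => [|t s IH] //= /andP [Ht Ha].
case: (fT_spec Ht) => e [-> He] /=.
by rewrite He IH.
Qed.

Lemma map_rawe_f : map rawe f = [seq (P t, nth d0 c t) | t <- iota 0 (size c)].
Proof.
apply: map_rawe_pmap; apply/allP => t; by rewrite mem_iota add0n.
Qed.

Lemma size_f : size f = size c.
Proof. by rewrite -(size_map rawe) map_rawe_f size_map size_iota. Qed.

Lemma seg_path n : forall a (q : seq ET) (u w : V), a + n <= size c ->
  map rawe q = [seq (P t, nth d0 c t) | t <- iota a n] ->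
  ssval u = P a -> ssval w = P (a + n) -> @is_path B T u q w.
Proof.
elim: n => [|n IH] a q u w Hn Hq Hu Hw.
  case: q Hq => // _ /=; apply/eqP; apply: val_inj; by rewrite /= Hu Hw addn0.
case: q Hq => [|e q] //= [E1 E2] Hq.
apply/andP; split.
  by apply/eqP; apply: val_inj; rewrite /= Hu.
apply: (IH a.+1) => //; first by rewrite addSnnS.
  by rewrite /= E1 E2 P_succ // (leq_trans _ Hn) // -addSnnS leq_addr.
by rewrite addSnnS.
Qed.

Lemma vert_P (v : V) : exists2 a, a <= size c & ssval v = P a.
Proof. by case/mapP: (ssvalP v) => a; rewrite mem_iota add0n ltnS => Ha ->; exists a. Qed.

Definition r0 : V := SeqSub (P_mem (leq0n (size c))).

Lemma path_to (v : V) : exists q, @is_path B T r0 q v.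
Proof.
case: (vert_P v) => a Ha Hv; exists (take a f).
apply: (seg_path (a := 0) (n := a)) => //.
by rewrite map_take map_rawe_f -map_take take_iota (minn_idPl Ha).
Qed.

Lemma T_tree : is_tree T.
Proof.
split; last exact: tree_noloop.
move=> u w; case: (path_to u) => q1 H1; case: (path_to w) => q2 H2.
exists (pinv (G:=T) q1 ++ q2); exact: is_path_catI (is_path_inv (G:=T) H1) H2.
Qed.

Lemma rawe_nth f0 t : t < size c -> rawe (nth f0 f t) = (P t, nth d0 c t).
Proof.
move=> Ht; rewrite -(nth_map f0 (rawe f0)); last by rewrite size_f.
by rewrite map_rawe_f (nth_map 0) ?size_iota // nth_iota.
Qed.

Lemma build_tree : exists (T : lgraph B) (f : seq (edge T)) (f0 : edge T) (h : smorph T S1),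
  is_tree T /\ (exists u w, is_path u f w) /\ map (@lab B T) f = map (@lab B S1) c /\
  map (me h) f = c /\ nth f0 f 0 = einv (nth f0 f (size c).-1).
Proof.
have Hf0 : 0 < size f by rewrite size_f.
case Ef: f Hf0 => [|f0 f'] // _.
exists T, f, f0, h; split; first exact: T_tree.
split.
  exists r0, (SeqSub (P_mem (leqnn (size c)))).
  apply: (seg_path (a := 0) (n := size c)) => //; exact: map_rawe_f.
split.
  have -> : map (@lab B T) f = map (fun p => lab p.2) (map rawe f) by rewrite -map_comp.
  rewrite map_rawe_f -map_comp -[in RHS](mkseq_nth d0 c) /mkseq -map_comp.
  by apply: eq_map.
split.
  have -> : map (me h) f = map (fun p => p.2) (map rawe f) by rewrite -map_comp.
  rewrite map_rawe_f -map_comp -[in RHS](mkseq_nth d0 c) /mkseq.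
  by apply: eq_map.
have Hm : (size c).-1 < size c by rewrite prednK.
apply: rawe_inj; rewrite rawe_nth //.
rewrite /rawe /= /einvT_v /=.
have := rawe_nth f0 Hm; rewrite /rawe => [[-> ->]].
rewrite P_succ // prednK // Hend einvKK.
by rewrite /P take0 take_size Hred.
Qed.

End Tree.

End TreeM.



Lemma has_split (T : Type) (a : pred T) s : has a s ->
  exists s1 x s2, s = s1 ++ x :: s2 /\ a x.
Proof.
elim: s => [|x s IH] //= /orP [Hx|Hs]; first by exists [::], x, s.
by case: (IH Hs) => s1 [y [s2 [-> Hy]]]; exists (x :: s1), y, s2.
Qed.

Section Main.
Variables (B : finType) (S0 S1 : lgraph B) (g : smorph S0 S1) (b : B).
Notation E0 := (edge S0).
Notation G := (me g).

Lemma tgt_g (e : E0) : tgt (G e) = mv g (tgt e).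
Proof. by rewrite /tgt -me_einv me_src. Qed.

Lemma map_path_g (u w : vert S0) (p : seq E0) :
  is_path u p w -> is_path (mv g u) (map G p) (mv g w).
Proof.
elim: p u => [|e p IH] u /=; first by move/eqP => ->.
by case/andP => /eqP He Hp; rewrite me_src He eqxx tgt_g IH.
Qed.

Lemma red_map_rho (w : seq E0) : red (map G (rev (rho [::] w))) = red (map G w).
Proof.
elim/last_ind: w => [|w c IH] //.
rewrite rho_rcons map_rcons -cats1.
rewrite (red_cat_congr (esym IH) (erefl (red [:: G c]))).
case E1: (rho [::] w) => [|d R'] //.
have [Hd|Hd] := eqVneq d (einv c).
  have -> : rstep (d :: R') c = R' by rewrite /= Hd eqxx.
  rewrite rev_cons map_rcons -cats1 Hd me_einv -catA /=.
  have := red_cancel (map G (rev R')) (einv (G c)) [::].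
  by rewrite einvKK cats0 => ->.
have -> : rstep (d :: R') c = c :: d :: R' by rewrite /= (negbTE Hd).
by rewrite [rev (c :: _)]rev_cons map_rcons cats1.
Qed.

Lemma lab1_g (z z' : E0) : G z' = einv (G z) -> (lab z').1 = (lab z).1.
Proof. by move=> H; rewrite -(me_lab g z') H lab_einv me_lab. Qed.

Lemma minimal n : forall (s alpha : seq E0) x beta y gamma, size beta < n ->
  s = alpha ++ x :: beta ++ y :: gamma -> (lab x).1 = b -> G y = einv (G x) ->
  red (map G beta) = [::] ->
  exists alpha' x' beta' y' gamma', s = alpha' ++ x' :: beta' ++ y' :: gamma' /\
    (lab x').1 = b /\ G y' = einv (G x') /\ red (map G beta') = [::] /\
    all (fun z => (lab z).1 != b) beta'.
Proof.
elim: n => [|n IH] s alpha x beta y gamma Hn Hs Hx Hy Hb //.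
case Hh: (has (fun z => (lab z).1 == b) beta); last first.
  exists alpha, x, beta, y, gamma; do 4 (split => //).
  apply/allP => z Hz; apply/negP => Hzb.
  by move/negbT: Hh => /hasPn /(_ z Hz); rewrite Hzb.
case: (has_split Hh) => b1 [z [b2 [Hbeta /eqP Hz]]].
case: (red_cross Hb Hbeta) => [[p1 [z' [p2 [Hp1 [Hz' Hp2]]]]]|[r1 [z' [r2 [Hr [Hz' Hr1]]]]]].
- apply: (IH s (alpha ++ x :: p1) z' p2 z (b2 ++ y :: gamma)) => //.
  + by move: Hn; rewrite Hbeta Hp1 !size_cat /=; lia.
  + by rewrite Hs Hbeta Hp1 -!catA.
  + by rewrite (lab1_g Hz').
  + by rewrite Hz' einvKK.
- apply: (IH s (alpha ++ x :: b1) z r1 z' (r2 ++ y :: gamma)) => //.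
  + by move: Hn; rewrite Hbeta Hr !size_cat /= !size_cat /=; lia.
  + by rewrite Hs Hbeta Hr -!catA /= -?catA.
Qed.

Lemma lab_neq (x y : E0) : lab x = (b, true) -> lab y = (b, true) -> x != einv y.
Proof.
move=> Hx Hy; apply/eqP => H; have := congr1 (@lab B S0) H.
by rewrite lab_einv Hx Hy.
Qed.

Lemma imm_cons (x : E0) R : immersed R ->
  (forall r0 R1, R = r0 :: R1 -> r0 != einv x) -> immersed (x :: R).
Proof.
case: R => [|r0 R1] //= H1 H2.
by rewrite (H2 r0 R1 erefl).
Qed.

Lemma imm_rcons (x : E0) R y : immersed (x :: R) -> last x R != einv y ->
  immersed (rcons (x :: R) y).
Proof.
rewrite /immersed /= rcons_path => -> /=.
by rewrite eq_einv_sym.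
Qed.

Definition Concl := exists (s : seq E0) u w alpha x beta y gamma,
  is_path u s w /\ immersed s /\ s = alpha ++ x :: beta ++ y :: gamma /\
  (lab x).1 = b /\ G y = einv (G x) /\ red (map G beta) = [::].

Lemma finish (x : E0) mid y u w : is_path u (x :: mid ++ [:: y]) w ->
  immersed (x :: mid ++ [:: y]) -> (lab x).1 = b ->
  (red (map G mid) = [::] /\ G y = einv (G x)) \/ red (map G mid) = [:: einv (G x)] ->
  Concl.
Proof.
move=> Hp Hi Hx [[Hm Hy]|Hm].
  by exists (x :: mid ++ [:: y]), u, w, [::], x, mid, y, [::].
case: (red_single Hm) => w1 [z [w2 [Hmid [Hz Hw1]]]].
exists (x :: mid ++ [:: y]), u, w, [::], x, w1, z, (w2 ++ [:: y]).
subst mid; rewrite -catA in Hp Hi *; by do !split.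
Qed.

Section Cases.
Variables (e e' : E0) (R : seq E0).
Hypotheses (Hne : e != e') (He : lab e = (b, true)) (He' : lab e' = (b, true))
  (Hg : G e = G e') (HR : is_path (src e) R (src e')) (HRi : immersed R)
  (HRr : red (map G R) = [::]).

Lemma labe1 : (lab (einv e)).1 = b. Proof. by rewrite lab_einv He. Qed.

Lemma caseC mid : R = rcons mid (einv e') -> head (einv e) R != e -> Concl.
Proof.
move=> HRm Hh.
apply: (@finish (einv e) mid (einv e') (tgt e) (src e')).
- rewrite cats1 -HRm /= /tgt einvKK eqxx /=; exact: HR.
- rewrite cats1 -HRm; apply: imm_cons => // r0 R1 HR1.
  by move: Hh; rewrite HR1 /= einvKK.
- exact: labe1.
- right; move: HRr; rewrite HRm map_rcons -cats1 me_einv => /red_tailinv ->.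
  by rewrite me_einv einvKK Hg.
Qed.

Lemma caseB R1 : R = e :: R1 -> last e R1 != einv e' -> Concl.
Proof.
move=> HRm Hl.
apply: (@finish e R1 e' (src e) (tgt e')).
- change (is_path (src e) ((e :: R1) ++ [:: e']) (tgt e')).
  rewrite -HRm; apply: (is_path_catI HR); by rewrite /= !eqxx.
- rewrite cats1 -rcons_cons; apply: imm_rcons => //; by rewrite -HRm.
- by rewrite He.
- by right; move: HRr; rewrite HRm /= => /red_headinv.
Qed.

Lemma caseD : head (einv e) R != e -> last e' R != einv e' -> Concl.
Proof.
move=> Hh Hl.
apply: (@finish (einv e) R e' (tgt e) (tgt e')).
- rewrite /= {1}/tgt eqxx /=.
  have -> : tgt (einv e) = src e by rewrite /tgt einvKK.
  apply: (is_path_catI HR); by rewrite /= !eqxx.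
- apply: imm_cons.
    case: R HRi Hl => [|r0 R1] // HRi' Hl'.
    by rewrite cats1; apply: imm_rcons.
  move=> r0 R1; case: R Hh => [|r1 R2] /= Hh'.
    by case=> <- _; rewrite einvKK eq_sym.
  by case=> <- _; rewrite einvKK.
- exact: labe1.
- by left; split => //; rewrite me_einv einvKK Hg.
Qed.

Lemma caseA R1 : R = e :: rcons R1 (einv e') -> Concl.
Proof.
move=> HRm.
apply: (@finish e R1 (einv e') (src e) (src e')).
- by rewrite cats1 -HRm.
- by rewrite cats1 -HRm.
- by rewrite He.
- left; split; last by rewrite me_einv Hg.
  apply: (@red_conj _ _ (G e)).
  by move: HRr; rewrite HRm /= map_rcons -cats1 me_einv Hg.
Qed.

Lemma cases : Concl.
Proof.
have Hee' : e != einv e' by apply: lab_neq.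
have [HR0|[R0 [l HRl]]] : R = [::] \/ exists R0 l, R = rcons R0 l.
  by case/lastP: R => [|R0 l]; [left|right; exists R0, l].
  apply: caseD; rewrite HR0 /=; first exact: einv_neq.
  by rewrite eq_sym einv_neq.
case: (eqVneq l (einv e')) => [Hl|Hl].
  subst l; case: R0 HRl => [|r R1] HRl.
    by apply: (caseC HRl); rewrite HRl /= eq_sym.
  case: (eqVneq r e) => [Hr|Hr].
    by subst r; apply: (caseA (R1 := R1)); rewrite HRl rcons_cons.
  by apply: (caseC HRl); rewrite HRl.
case: R0 HRl => [|r R1] HRl.
  case: (eqVneq l e) => [Hl'|Hl'].
    by subst l; apply: (caseB (R1 := [::])).
  by apply: caseD; rewrite HRl.
case: (eqVneq r e) => [Hr|Hr].
  subst r; apply: (caseB (R1 := rcons R1 l)); first by rewrite HRl rcons_cons.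
  by rewrite last_rcons.
by apply: caseD; rewrite HRl //= last_rcons.
Qed.

End Cases.

End Main.



Unset Implicit Arguments.
Theorem lemma9p6 (B : finType) (S0 S1 : lgraph B) (g : smorph S0 S1)
    (v0 : vert S0) (b : B) :
  connected S0 -> connected S1 -> pi1_surj g v0 ->
  nb_edges S1 b < nb_edges S0 b ->
  exists (sigma : seq (edge S0)) (e0 : edge S0)
         (T : lgraph B) (f : seq (edge T)) (f0 : edge T) (h : smorph T S1),
    let m := (size sigma).-1 in
    0 < size sigma /\
    (exists u w, is_path u sigma w) /\ immersed sigma /\
    is_tree T /\
    (exists u w, is_path u f w) /\ map (@lab B T) f = map (@lab B S0) sigma /\
    map (me h) f = map (me g) sigma /\
    nth f0 f 0 = einv (nth f0 f m) /\
    lab (nth e0 sigma 0) = lab (einv (nth e0 sigma m)) /\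
    (lab (nth e0 sigma 0)).1 = b /\
    (forall i, 0 < i < m -> (lab (nth e0 sigma i)).1 != b).
Proof.
move=> Hc0 _ Hpi Hnb.
(* pigeonhole *)
have [e [e' [Hne [He [He' Hg]]]]] : exists e e' : edge S0, e != e' /\
    lab e = (b, true) /\ lab e' = (b, true) /\ me g e = me g e'.
  case: (boolP [exists e : edge S0, exists e' : edge S0,
     [&& e != e', lab e == (b, true), lab e' == (b, true) & me g e == me g e']]).
    case/existsP => e /existsP [e' /and4P [H1 /eqP H2 /eqP H3 /eqP H4]].
    by exists e, e'.
  move=> Hno; exfalso.
  have Hinj : {in [pred e : edge S0 | lab e == (b, true)] &, injective (me g)}.
    move=> x y Hx Hy Hxy; apply/eqP; apply/negPn/negP => Hxy'.
    move/negP: Hno; apply; apply/existsP; exists x; apply/existsP; exists y.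
    move: Hx Hy; rewrite !inE => Hx Hy; by rewrite Hxy' Hx Hy Hxy eqxx.
  have := card_in_image Hinj.
  move=> Hcard; move: Hnb; rewrite /nb_edges -Hcard ltnNge.
  move/negP; apply; apply: subset_leq_card; apply/subsetP => y /imageP [x Hx ->].
  by rewrite inE me_lab.
case: (Hc0 (src e) v0) => delta Hdelta.
case: (Hc0 v0 (src e')) => eps Heps.
have Hsrc : mv g (src e) = mv g (src e') by rewrite -!me_src Hg.
set p := pinv (map (me g) eps ++ map (me g) delta).
have Hp : is_path (mv g v0) p (mv g v0).
  apply: is_path_inv; apply: (is_path_catI (map_path_g g Heps)).
  by rewrite -Hsrc; apply: map_path_g.
case: (Hpi p Hp) => l [Hl Hhom].
have Hlr := red_homotopic Hhom.
set q0 := delta ++ l ++ eps.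
have Hq0 : is_path (src e) q0 (src e').
  by apply: (is_path_catI Hdelta); apply: (is_path_catI Hl).
have Hq0r : red (map (me g) q0) = [::].
  rewrite /q0 !map_cat.
  rewrite (red_cat_congr (erefl (red (map (me g) delta)))
             (red_cat_congr Hlr (erefl (red (map (me g) eps))))).
  rewrite /p pinv_cat -catA catA.
  rewrite (red_cat_congr (etrans (red_inv (map (me g) delta)) (esym (red_nil _))) (etrans (red_inv' (map (me g) eps)) (esym (red_nil _)))).
  by [].
set R := rev (rho [::] q0).
have HR : is_path (src e) R (src e') by apply: is_path_red.
have HRi : immersed R by apply: immersed_red.
have HRr : red (map (me g) R) = [::] by rewrite red_map_rho.
case: (cases Hne He He' Hg HR HRi HRr) =>
  s [u [w [alpha [x [beta [y [gamma [Hs [Hsi [Hsd [Hx [Hy Hb]]]]]]]]]]]].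
case: (minimal (n := (size beta).+1) (ltnSn _) Hsd Hx Hy Hb) =>
  alpha' [x' [beta' [y' [gamma' [Hsd' [Hx' [Hy' [Hb' Hall]]]]]]]].
set sig := x' :: beta' ++ [:: y'].
have Hsd2 : s = alpha' ++ sig ++ gamma' by rewrite Hsd' /sig /= -catA.
have Hsigp : is_path (pend u alpha') sig (pend (pend u alpha') sig).
  by move: Hs; rewrite Hsd2 => /is_path_catE [_] /is_path_catE [].
have Hsigi : immersed sig.
  by move: Hsi; rewrite Hsd2 => /sorted_catR /sorted_catL.
set c := map (me g) sig.
have Hcp := map_path_g g Hsigp.
have Hcred : red c = [::].
  rewrite /c /sig /= map_cat /= Hy'.
  change (red ([:: me g x'] ++ (map (me g) beta' ++ [:: einv (me g x')])) = [::]).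
  rewrite (red_cat_congr (erefl (red [:: me g x'])) (red_cat_congr (etrans Hb' (esym (red_nil _))) (erefl (red [:: einv (me g x')])))).
  exact: (red_inv [:: me g x']).
have Hrho : rho [::] c = [::].
  by move: Hcred; rewrite /red => /(congr1 rev); rewrite revK.
have Hsc : 0 < size c by rewrite /c size_map.
have Hend : nth (me g x') c (size c).-1 = einv (nth (me g x') c 0).
  rewrite /c /sig /= map_cat size_cat /= addn1 /= nth_cat size_map ltnn subnn /=.
  exact: Hy'.
case: (TreeM.build_tree Hcp Hrho Hsc Hend) => T [f [f0 [h [HT [Hf [Hfl [Hfh Hfn]]]]]]].
exists sig, x', T, f, f0, h => m.
have Hm : m = size beta' + 1 by rewrite /m /sig /= size_cat /= addn1.
split; first by [].
split; first by exists (pend u alpha'), (pend (pend u alpha') sig).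
split; first exact: Hsigi.
split; first exact: HT.
split; first exact: Hf.
split.
  rewrite Hfl /c -map_comp; apply: eq_map => z /=; exact: me_lab.
split; first exact: Hfh.
split; first by rewrite Hfn /c size_map.
have Hny : nth x' sig m = y'.
  by rewrite Hm addn1 /sig /= nth_cat ltnn subnn.
split.
  rewrite Hny lab_einv -(me_lab g y') Hy' lab_einv me_lab.
  by case: (lab x') => a bb /=; rewrite negbK.
split; first exact: Hx'.
move=> [|i] // /andP [_ Him].
rewrite Hm addn1 ltnS in Him.
change (nth x' sig i.+1) with (nth x' (beta' ++ [:: y']) i).
rewrite nth_cat Him.
by apply: (allP Hall); apply: mem_nth.
Qed.
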